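(* Let $N\ge1$, $\mathsf{C}(x)=\tfrac12\log(1+x)$, and for non-negative SNRs $\mathbf{S}=(\mathsf{SNR}_{s,r},\mathsf{SNR}_{s,1},\dots,\mathsf{SNR}_{s,N},\mathsf{SNR}_{r,1},\dots,\mathsf{SNR}_{r,N})$ define $$h_j(\mathbf{S})=\mathsf{SNR}_{s,j}+\frac{\mathsf{SNR}_{r,j}\,\mathsf{SNR}_{s,r}}{\mathsf{SNR}_{s,j}+\mathsf{SNR}_{r,j}+\mathsf{SNR}_{s,r}+1},\qquad \widetilde R_{QF}(\mathbf{S})=\min_{1\le j\le N}\mathsf{C}(h_j(\mathbf{S})).$$ If $\mathsf{SNR}_{s,1},\dots,\mathsf{SNR}_{s,N}\ge0$ are held fixed, then $\widetilde R_{QF}$ is quasi-concave as a function of the remaining SNRs $(\mathsf{SNR}_{s,r},\mathsf{SNR}_{r,1},\dots,\mathsf{SNR}_{r,N})\in[0,\infty)^{N+1}$.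
   Context: $\widetilde R_{QF}$ is a quantize-forward achievable rate (Gaussian inputs, optimized quantization noise) for a real AWGN multicast relay channel with source $s$, relay $r$, destinations $1,\dots,N$ and link SNRs $\mathsf{SNR}_{u,v}\ge0$. A function $F$ on a convex set is quasi-concave if $F(\lambda x_1+(1-\lambda)x_2)\ge\min(F(x_1),F(x_2))$ for all $x_1,x_2$ and $\lambda\in[0,1]$. *)

(* Defs.v *)
From mathcomp Require Import all_boot all_order all_algebra.
From mathcomp Require Import all_classical all_reals all_analysis.
Set Implicit Arguments. Unset Strict Implicit. Unset Printing Implicit Defensive.
Import Order.TTheory GRing.Theory Num.Theory.
Local Open Scope ring_scope.

Definition Cap {R : realType} (x : R) : R := ln (1 + x) / 2.

Definition hQF {R : realType} (N : nat) (snr_sr : R) (snr_s snr_r : 'I_N -> R)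
  (j : 'I_N) : R :=
  snr_s j + snr_r j * snr_sr / (snr_s j + snr_r j + snr_sr + 1).

(* \tilde R_QF(S) = min_{1<=j<=N} C(h_j(S)); N >= 1 so the min is over a
   nonempty index set; the initial value of the fold is one of the terms. *)
Definition RQF {R : realType} (N : nat) (hN : (0 < N)%N) (snr_sr : R)
  (snr_s snr_r : 'I_N -> R) : R :=
  \big[Num.min/ Cap (hQF snr_sr snr_s snr_r (Ordinal hN))]_(j < N)
     Cap (hQF snr_sr snr_s snr_r j).

(* Main.v *)
Require Import Defs.
From mathcomp Require Import all_boot all_order all_algebra.
From mathcomp Require Import all_classical all_reals all_analysis.
From mathcomp Require Import ring lra.
Import Order.TTheory GRing.Theory Num.Theory.
Local Open Scope ring_scope.

Lemma key (R : realType) (c r1 a1 r2 a2 l k : R) :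
  1 <= c -> 0 <= r1 -> 0 <= a1 -> 0 <= r2 -> 0 <= a2 -> 0 <= l -> l <= 1 ->
  0 <= k -> k * (r1 + a1 + c) <= r1 * a1 -> k * (r2 + a2 + c) <= r2 * a2 ->
  k * ((l * r1 + (1 - l) * r2) + (l * a1 + (1 - l) * a2) + c)
    <= (l * r1 + (1 - l) * r2) * (l * a1 + (1 - l) * a2).
Proof.
move=> hc hr1 ha1 hr2 ha2 hl0 hl1 hk h1 h2.
have u1 : k <= r1.
  rewrite leNgt; apply/negP => lt; have : k * c <= 0 by nra. nra.
have v1 : k <= a1.
  rewrite leNgt; apply/negP => lt; have : k * c <= 0 by nra. nra.
have u2 : k <= r2.
  rewrite leNgt; apply/negP => lt; have : k * c <= 0 by nra. nra.
have v2 : k <= a2.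
  rewrite leNgt; apply/negP => lt; have : k * c <= 0 by nra. nra.
set U1 := r1 - k; set V1 := a1 - k; set U2 := r2 - k; set V2 := a2 - k.
set K := k * k + k * c.
have hK : 0 <= K by rewrite /K; nra.
have e1 : K <= U1 * V1 by rewrite /K /U1 /V1; nra.
have e2 : K <= U2 * V2 by rewrite /K /U2 /V2; nra.
have pU1 : 0 <= U1 by rewrite /U1; lra.
have pU2 : 0 <= U2 by rewrite /U2; lra.
have pV1 : 0 <= V1 by rewrite /V1; lra.
have pV2 : 0 <= V2 by rewrite /V2; lra.
set w := U1 * V2 + U2 * V1.
have hw : 0 <= w by rewrite /w; nra.
have hKK : K * K <= (U1 * V1) * (U2 * V2) by nra.
have hw2 : 4 * (K * K) <= w * w.
  have : 0 <= (U1 * V2 - U2 * V1) ^+ 2 by apply: sqr_ge0.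
  rewrite /w; nra.
have hw3 : 2 * K <= w by nra.
have hl2 : 0 <= l * (1 - l) by nra.
have : K <= (l * U1 + (1 - l) * U2) * (l * V1 + (1 - l) * V2).
  have -> : (l * U1 + (1 - l) * U2) * (l * V1 + (1 - l) * V2) =
    l * l * (U1 * V1) + (1 - l) * (1 - l) * (U2 * V2) + l * (1 - l) * w
    by rewrite /w; ring.
  have : l * l * K <= l * l * (U1 * V1) by apply: ler_wpM2l => //; nra.
  have : (1 - l) * (1 - l) * K <= (1 - l) * (1 - l) * (U2 * V2)
    by apply: ler_wpM2l => //; nra.
  have : l * (1 - l) * (2 * K) <= l * (1 - l) * w by apply: ler_wpM2l.
  nra.
rewrite /K /U1 /U2 /V1 /V2; nra.
Qed.

Lemma hQF_ge0 (R : realType) (N : nat) (a : R) (s r : 'I_N -> R) j :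
  0 <= a -> 0 <= s j -> 0 <= r j -> 0 <= hQF a s r j.
Proof.
move=> ha hs hr; rewrite /hQF; apply: addr_ge0 => //.
apply: divr_ge0; [exact: mulr_ge0|lra].
Qed.

Lemma Cap_le (R : realType) (x y : R) : 0 <= x -> x <= y -> Cap x <= Cap y.
Proof.
move=> hx hxy; rewrite /Cap ler_wpM2r // ?invr_ge0 //.
rewrite ler_ln ?lerD2l // posrE; lra.
Qed.

Lemma hmin (R : realType) (N : nat) (s : 'I_N -> R) (a1 a2 : R)
  (r1 r2 : 'I_N -> R) (l : R) j :
  0 <= s j -> 0 <= a1 -> 0 <= r1 j -> 0 <= a2 -> 0 <= r2 j -> 0 <= l -> l <= 1 ->
  Num.min (hQF a1 s r1 j) (hQF a2 s r2 j) <=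
  hQF (l * a1 + (1 - l) * a2) s (fun j => l * r1 j + (1 - l) * r2 j) j.
Proof.
move=> hs ha1 hr1 ha2 hr2 hl0 hl1; rewrite /hQF.
set g1 := r1 j * a1 / _; set g2 := r2 j * a2 / _.
set k := Num.min g1 g2.
have k1 : k <= g1 by rewrite /k ge_min lexx.
have k2 : k <= g2 by rewrite /k ge_min lexx orbT.
have k0 : 0 <= k by rewrite /k le_min; apply/andP; split;
  apply: divr_ge0; [exact: mulr_ge0|lra|exact: mulr_ge0|lra].
have D1 : 0 < s j + r1 j + a1 + 1 by lra.
have D2 : 0 < s j + r2 j + a2 + 1 by lra.
have D3 : 0 < s j + (l * r1 j + (1 - l) * r2 j) + (l * a1 + (1 - l) * a2) + 1.
  have : 0 <= l * r1 j by exact: mulr_ge0.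
  have : 0 <= (1 - l) * r2 j by apply: mulr_ge0; lra.
  have : 0 <= l * a1 by exact: mulr_ge0.
  have : 0 <= (1 - l) * a2 by apply: mulr_ge0; lra.
  lra.
move: k1 k2; rewrite /g1 /g2 !ler_pdivlMr // => k1 k2.
have := @key R (s j + 1) (r1 j) a1 (r2 j) a2 l k.
have e1 : k * (r1 j + a1 + (s j + 1)) <= r1 j * a1 by
  rewrite (_ : r1 j + a1 + (s j + 1) = s j + r1 j + a1 + 1) //; ring.
have e2 : k * (r2 j + a2 + (s j + 1)) <= r2 j * a2 by
  rewrite (_ : r2 j + a2 + (s j + 1) = s j + r2 j + a2 + 1) //; ring.
move=> /(_ ltac:(lra) hr1 ha1 hr2 ha2 hl0 hl1 k0 e1 e2) hk.
have hk' : k <= (l * r1 j + (1 - l) * r2 j) * (l * a1 + (1 - l) * a2) /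
  (s j + (l * r1 j + (1 - l) * r2 j) + (l * a1 + (1 - l) * a2) + 1).
  rewrite ler_pdivlMr //.
  rewrite (_ : s j + (l * r1 j + (1 - l) * r2 j) + (l * a1 + (1 - l) * a2) + 1
    = (l * r1 j + (1 - l) * r2 j) + (l * a1 + (1 - l) * a2) + (s j + 1)) //; ring.
apply: le_trans (_ : s j + k <= _); last by rewrite lerD2l.
rewrite /k; case: (leP g1 g2) => hg.
- by rewrite ge_min lexx.
- by rewrite ge_min lexx orbT.
Qed.

Theorem theorem3 (R : realType) (N : nat) (hN : (0 < N)%N)
  (snr_s : 'I_N -> R) (hs : forall j, 0 <= snr_s j)
  (a1 a2 : R) (r1 r2 : 'I_N -> R) (lam : R) :
  0 <= a1 -> (forall j, 0 <= r1 j) ->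
  0 <= a2 -> (forall j, 0 <= r2 j) ->
  0 <= lam <= 1 ->
  Num.min (RQF hN a1 snr_s r1) (RQF hN a2 snr_s r2)
    <= RQF hN (lam * a1 + (1 - lam) * a2) snr_s
             (fun j => lam * r1 j + (1 - lam) * r2 j).
Proof.
move=> ha1 hr1 ha2 hr2 /andP[hl0 hl1].
have P : forall j, Num.min (RQF hN a1 snr_s r1) (RQF hN a2 snr_s r2) <=
  Cap (hQF (lam * a1 + (1 - lam) * a2) snr_s
             (fun j => lam * r1 j + (1 - lam) * r2 j) j).
  move=> j.
  have m1 : Num.min (RQF hN a1 snr_s r1) (RQF hN a2 snr_s r2) <=
      Cap (hQF a1 snr_s r1 j) by rewrite ge_min /RQF bigmin_le.
  have m2 : Num.min (RQF hN a1 snr_s r1) (RQF hN a2 snr_s r2) <=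
      Cap (hQF a2 snr_s r2 j) by rewrite ge_min /RQF bigmin_le orbT.
  have h := @hmin R N snr_s a1 a2 r1 r2 lam j (hs j) ha1 (hr1 j) ha2 (hr2 j) hl0 hl1.
  move: h; rewrite minEle; case: ifP => _ h.
  - apply: le_trans m1 _; apply: Cap_le h; exact: hQF_ge0.
  - apply: le_trans m2 _; apply: Cap_le h; exact: hQF_ge0.
rewrite {3}/RQF; apply: le_bigmin => // i _; exact: P.
Qed.
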